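(* Let $(\mathfrak g,[\,,\,]_0,\rho,[\,,\,],\mathfrak B,r,\lambda)$ be a triple Lie algebra and $\{\,,\,\}_r$ the Lie–Poisson bracket $\{f,g\}_r(a^* )=\langle[df(a^* ),dg(a^* )]_r,a^*\rangle$ on $\mathfrak g^*$. Let $\mathcal H\in C^\infty(\mathfrak g^* )$ satisfy $\langle d\mathcal H(a^* ),\rho^*(x)a^*\rangle=\langle d\mathcal H(a^* ),\mathrm{ad}^*(x)a^*\rangle=0$ for all $a^*\in\mathfrak g^*$, $x\in\mathfrak g$. Let $\{e_i\}$ be a basis of $\mathfrak g$ and $\{e^i\}$ the dual basis with respect to $\mathfrak B$ ($\mathfrak B(e_i,e^j)=\delta_{ij}$), $\Omega=\sum_ie_i\otimes e^i$, and define smooth maps $L,M:\mathfrak g^*\to\mathfrak g$ by $L(a^* )=(a^*\otimes1)(\Omega)=\sum_i\langle a^*,e_i\rangle e^i$ and $M(a^* )=\tilde r(d\mathcal H(a^* ))$. Then $dL(a^* )X_{\mathcal H}(a^* )=-\rho(M(a^* ))L(a^* )$ for all $a^*\in\mathfrak g^*$, where $X_{\mathcal H}f=\{\mathcal H,f\}_r$; hence $(\mathfrak g,\rho,\mathfrak g,L,M)$ is a self-dual nonabelian generalized Lax pair for the Hamiltonian system $(\mathfrak g^*,\{\,,\,\}_r,\mathcal H)$ (with $\mathfrak a=(\mathfrak g,[\,,\,])$ and form $\mathfrak B$).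
   Context: All spaces are finite-dimensional real. A triple Lie algebra $(\mathfrak g,[\,,\,]_0,\rho,[\,,\,],\mathfrak B,r,\lambda)$ consists of: a Lie algebra $(\mathfrak g,[\,,\,]_0)$; a second Lie bracket $[\,,\,]$ on the same vector space and a representation $\rho$ of $(\mathfrak g,[\,,\,]_0)$ on $\mathfrak g$ with each $\rho(x)$ a derivation of $(\mathfrak g,[\,,\,])$ (write $x\cdot y=\rho(x)y$); a nondegenerate symmetric bilinear form $\mathfrak B$ with $\mathfrak B([x,y],z)=\mathfrak B(x,[y,z])$ and $\mathfrak B(\rho(\xi)x,y)+\mathfrak B(x,\rho(\xi)y)=0$; an element $r\in\mathfrak g\otimes\mathfrak g$, identified with $r:\mathfrak g^*\to\mathfrak g$ by $\langle r(a^* ),b^*\rangle=\langle a^*\otimes b^*,r\rangle$, and $\lambda\in\mathbb R$ such that, with $\varphi(x)=\mathfrak B(x,\cdot)$ and $\tilde r=r\varphi:\mathfrak g\to\mathfrak g$, $[x,y]_r=\tilde r(x)\cdot y-\tilde r(y)\cdot x+\lambda[x,y]$ is a Lie bracket. $df(a^* )\in\mathfrak g=\mathfrak g^{**}$; $\langle\rho^*(x)a^*,y\rangle=-\langle a^*,\rho(x)y\rangle$; $\langle\mathrm{ad}^*(x)a^*,y\rangle=-\langle a^*,[x,y]\rangle$. For a Lie algebra $\mathfrak k$ and a $\mathfrak k$-Lie algebra $(\mathfrak a,\rho)$ (a Lie algebra $\mathfrak a$ with Lie homomorphism $\rho:\mathfrak k\to\mathrm{Der}(\mathfrak a)$), a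 nonabelian generalized Lax pair for a Hamiltonian system $(P,w,\mathcal H)$ is $(\mathfrak k,\rho,\mathfrak a,L,M)$ with smooth $L:P\to\mathfrak a$, $M:P\to\mathfrak k$ and $dL(p)X_{\mathcal H}(p)=-\rho(M(p))L(p)$; it is self-dual if $\mathfrak a$ carries a nondegenerate symmetric bilinear form $\mathfrak B$ with $\mathfrak B([x,y],z)=\mathfrak B(x,[y,z])$ and $\mathfrak B(\rho(\xi)x,y)+\mathfrak B(x,\rho(\xi)y)=0$. *)

(* Defs.v *)
From Stdlib Require Import Reals.
From mathcomp Require Import ssreflect ssrfun ssrbool eqtype ssrnat seq fintype bigop.
Set Implicit Arguments.
Unset Strict Implicit.
Open Scope R_scope.

(* The n-dimensional real vector space R^n (coordinates w.r.t. a fixed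
   standard basis).  Both g and g^* are modelled by vec n. *)
Definition vec (n : nat) := 'I_n -> R.

Definition rsum (n : nat) (F : 'I_n -> R) : R := \big[Rplus/R0]_(i < n) F i.

Definition vzero (n : nat) : vec n := fun _ => R0.
Arguments vzero n : clear implicits.
Definition vadd (n : nat) (x y : vec n) : vec n := fun i => x i + y i.
Definition vscale (n : nat) (c : R) (x : vec n) : vec n := fun i => c * x i.
Definition vopp (n : nat) (x : vec n) : vec n := fun i => - x i.
Definition vsub (n : nat) (x y : vec n) : vec n := fun i => x i - y i.
Definition vsum (n m : nat) (F : 'I_m -> vec n) : vec n :=
  \big[(@vadd n)/(vzero n)]_(i < m) F i.
Definition ev (n : nat) (j : 'I_n) : vec n := fun i => if i == j then R1 else R0.

Definition pair (n : nat) (a x : vec n) : R := rsum (fun i => a i * x i).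

Definition vnorm (n : nat) (v : vec n) : R := sqrt (rsum (fun i => v i * v i)).

Definition lin (n : nat) (f : vec n -> vec n) : Prop :=
  (forall x y, f (vadd x y) = vadd (f x) (f y)) /\
  (forall c x, f (vscale c x) = vscale c (f x)).

Definition bilin (n : nat) (b : vec n -> vec n -> vec n) : Prop :=
  (forall x, lin (b x)) /\ (forall y, lin (fun x => b x y)).

Definition bilinR (n : nat) (b : vec n -> vec n -> R) : Prop :=
  (forall x y z, b (vadd x y) z = b x z + b y z) /\
  (forall c x z, b (vscale c x) z = c * b x z) /\
  (forall x y z, b x (vadd y z) = b x y + b x z) /\
  (forall c x z, b x (vscale c z) = c * b x z).

Definition is_lie (n : nat) (b : vec n -> vec n -> vec n) : Prop :=
  bilin b /\
  (forall x, b x x = vzero n) /\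
  (forall x y z, vadd (b x (b y z)) (vadd (b y (b z x)) (b z (b x y))) = vzero n).

Definition is_basis (n : nat) (e : 'I_n -> vec n) : Prop :=
  (forall c : 'I_n -> R, vsum (fun i => vscale (c i) (e i)) = vzero n ->
     forall i, c i = 0) /\
  (forall v : vec n, exists c : 'I_n -> R, v = vsum (fun i => vscale (c i) (e i))).

Definition rep_by_derivations (n : nat) (br0 rho br : vec n -> vec n -> vec n)
  : Prop :=
  bilin rho /\
  (forall x y z, rho (br0 x y) z = vsub (rho x (rho y z)) (rho y (rho x z))) /\
  (forall x y z, rho x (br y z) = vadd (br (rho x y) z) (br y (rho x z))).

Definition invariant_form (n : nat) (rho br : vec n -> vec n -> vec n)
  (B : vec n -> vec n -> R) : Prop :=
  bilinR B /\
  (forall x y, B x y = B y x) /\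
  (forall x, (forall y, B x y = 0) -> x = vzero n) /\
  (forall x y z, B (br x y) z = B x (br y z)) /\
  (forall xi x y, B (rho xi x) y + B x (rho xi y) = 0).

(* r = sum_{i,j} rr i j (eps_i (x) eps_j) in g (x) g, viewed as r : g^* -> g
   via <r(a^), b^> = <a^ (x) b^, r> (^ = dual). *)
Definition r_map (n : nat) (rr : 'I_n -> 'I_n -> R) (a : vec n) : vec n :=
  fun j => rsum (fun i => a i * rr i j).

Definition phiB (n : nat) (B : vec n -> vec n -> R) (x : vec n) : vec n :=
  fun k => B x (ev k).

Definition rtilde (n : nat) (rr : 'I_n -> 'I_n -> R) (B : vec n -> vec n -> R)
  (x : vec n) : vec n := r_map rr (phiB B x).

Definition bracket_r (n : nat) (rho br : vec n -> vec n -> vec n)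
  (rr : 'I_n -> 'I_n -> R) (B : vec n -> vec n -> R) (lam : R)
  (x y : vec n) : vec n :=
  vadd (vsub (rho (rtilde rr B x) y) (rho (rtilde rr B y) x)) (vscale lam (br x y)).

Definition triple_lie_algebra (n : nat) (br0 rho br : vec n -> vec n -> vec n)
  (B : vec n -> vec n -> R) (rr : 'I_n -> 'I_n -> R) (lam : R) : Prop :=
  is_lie br0 /\ is_lie br /\ rep_by_derivations br0 rho br /\
  invariant_form rho br B /\ is_lie (bracket_r rho br rr B lam).

Definition rho_star (n : nat) (rho : vec n -> vec n -> vec n) (x a : vec n) : vec n :=
  fun j => - pair a (rho x (ev j)).
Definition ad_star (n : nat) (br : vec n -> vec n -> vec n) (x a : vec n) : vec n :=
  fun j => - pair a (br x (ev j)).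

Definition continuous_v (n : nat) (f : vec n -> R) : Prop :=
  forall a eps, 0 < eps -> exists delta, 0 < delta /\
    forall b, vnorm (vsub b a) < delta -> Rabs (f b - f a) < eps.

(* f : g^* -> R is (Frechet) differentiable at a with df(a) = d in g = g^** *)
Definition has_differential (n : nat) (f : vec n -> R) (a d : vec n) : Prop :=
  forall eps, 0 < eps -> exists delta, 0 < delta /\
    forall h, vnorm h < delta ->
      Rabs (f (vadd a h) - f a - pair h d) <= eps * vnorm h.

Definition has_vdifferential (n : nat) (F : vec n -> vec n) (a : vec n)
  (D : vec n -> vec n) : Prop :=
  lin D /\
  forall eps, 0 < eps -> exists delta, 0 < delta /\
    forall h, vnorm h < delta ->
      vnorm (vsub (vsub (F (vadd a h)) (F a)) (D h)) <= eps * vnorm h.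

Fixpoint Ck (n : nat) (k : nat) (f : vec n -> R) {struct k} : Prop :=
  match k with
  | O => continuous_v f
  | S k' => exists df : vec n -> vec n,
      (forall a, has_differential f a (df a)) /\
      (forall j : 'I_n, Ck k' (fun a => df a j))
  end.

Definition smooth (n : nat) (f : vec n -> R) : Prop := forall k, Ck k f.

Definition smooth_v (n : nat) (F : vec n -> vec n) : Prop :=
  forall j : 'I_n, smooth (fun a => F a j).

(* Lie-Poisson bracket {f,g}_r(a) = <[df(a), dg(a)]_r, a>, given the
   differentials df, dg *)
Definition poisson (n : nat) (brr : vec n -> vec n -> vec n)
  (df dg : vec n -> vec n) (a : vec n) : R :=
  pair a (brr (df a) (dg a)).

(* X is the Hamiltonian vector field of H (with differential dH):
   X_H f = {H, f}_r for every smooth f, i.e. df(a)(X_H(a)) = {H,f}_r(a). *)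
Definition hamiltonian_vf (n : nat) (brr : vec n -> vec n -> vec n)
  (dH : vec n -> vec n) (X : vec n -> vec n) : Prop :=
  forall (f : vec n -> R) (df : vec n -> vec n),
    smooth f -> (forall b, has_differential f b (df b)) ->
    forall a, pair (X a) (df a) = poisson brr dH df a.

(* Self-dual nonabelian generalized Lax pair (k = g with [,]_0, a = g with [,],
   rho, L, M) for the Hamiltonian system on P = g^* with Hamiltonian vector
   field X:  dL(p) X(p) = - rho(M(p)) L(p). *)
Definition self_dual_lax_pair (n : nat) (br0 rho br : vec n -> vec n -> vec n)
  (B : vec n -> vec n -> R) (L M X : vec n -> vec n) : Prop :=
  is_lie br0 /\ is_lie br /\ bilin rho /\
  (forall x y z, rho (br0 x y) z = vsub (rho x (rho y z)) (rho y (rho x z))) /\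
  (forall x y z, rho x (br y z) = vadd (br (rho x y) z) (br y (rho x z))) /\
  invariant_form rho br B /\
  smooth_v L /\ smooth_v M /\
  (forall p, (exists D, has_vdifferential L p D) /\
     forall D, has_vdifferential L p D -> D (X p) = vopp (rho (M p) (L p))).

(* Main.v *)
Require Import Defs.
From HB Require Import structures.
From Stdlib Require Import Reals Lra FunctionalExtensionality.
From mathcomp Require Import ssreflect ssrfun ssrbool eqtype ssrnat seq fintype bigop.
Open Scope R_scope.
Set Implicit Arguments.
Unset Strict Implicit.

Lemma RA : associative Rplus. Proof. move=> x y z; ring. Qed.
HB.instance Definition _ := Monoid.isComLaw.Build R R0 Rplus RA Rplus_comm Rplus_0_l.
Lemma Rmult_0_l' : left_zero R0 Rmult. Proof. move=> x; ring. Qed.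
Lemma Rmult_0_r' : right_zero R0 Rmult. Proof. move=> x; ring. Qed.
HB.instance Definition _ := Monoid.isMulLaw.Build R R0 Rmult Rmult_0_l' Rmult_0_r'.
Lemma RDl : left_distributive Rmult Rplus. Proof. move=> x y z; ring. Qed.
Lemma RDr : right_distributive Rmult Rplus. Proof. move=> x y z; ring. Qed.
HB.instance Definition _ := Monoid.isAddLaw.Build R Rmult Rplus RDl RDr.

Section S.
Variable n : nat.

Lemma rsum_add (f g : 'I_n -> R) : rsum (fun i => f i + g i) = rsum f + rsum g.
Proof. by rewrite /rsum big_split. Qed.

Lemma rsum_scal (c : R) (f : 'I_n -> R) : rsum (fun i => c * f i) = c * rsum f.
Proof. by rewrite /rsum big_distrr. Qed.

Lemma rsum_ev (F : 'I_n -> R) j : rsum (fun i => F i * ev j i) = F j.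
Proof.
rewrite /rsum (bigD1 j) //= big1 /ev ?eqxx; first ring.
by move=> i /negbTE ->; ring.
Qed.

Lemma rsum0 : rsum (fun _ : 'I_n => 0) = 0.
Proof. by rewrite /rsum big1. Qed.

Lemma vsum_app m (F : 'I_m -> vec n) j : vsum F j = rsum (fun i => F i j).
Proof. by rewrite /vsum /rsum (big_morph (fun v : vec n => v j) (id1 := R0) (op1 := Rplus)). Qed.
Lemma pair_addl (a b x : vec n) : pair (vadd a b) x = pair a x + pair b x.
Proof. rewrite /pair -rsum_add; congr rsum; apply: functional_extensionality => i; rewrite /vadd; ring. Qed.
Lemma pair_addr (a x y : vec n) : pair a (vadd x y) = pair a x + pair a y.
Proof. rewrite /pair -rsum_add; congr rsum; apply: functional_extensionality => i; rewrite /vadd; ring. Qed.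
Lemma pair_scall c (a x : vec n) : pair (vscale c a) x = c * pair a x.
Proof. rewrite /pair -rsum_scal; congr rsum; apply: functional_extensionality => i; rewrite /vscale; ring. Qed.
Lemma pair_scalr c (a x : vec n) : pair a (vscale c x) = c * pair a x.
Proof. rewrite /pair -rsum_scal; congr rsum; apply: functional_extensionality => i; rewrite /vscale; ring. Qed.
Lemma pair_comm (a x : vec n) : pair a x = pair x a.
Proof. rewrite /pair; congr rsum; apply: functional_extensionality => i; ring. Qed.
Lemma pair_ev (a : vec n) j : pair a (ev j) = a j.
Proof. exact: rsum_ev. Qed.
Lemma pair_zeror (a : vec n) : pair a (vzero n) = 0.
Proof. rewrite /pair -rsum0; congr rsum; apply: functional_extensionality => i; rewrite /vzero; ring. Qed.

Lemma vdecomp (v : vec n) : v = vsum (fun k => vscale (v k) (ev k)).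
Proof.
apply: functional_extensionality => j; rewrite vsum_app /vscale.
have -> : (fun i => v i * ev i j) = (fun i => v i * ev j i).
  by apply: functional_extensionality => i; rewrite /ev eq_sym.
by rewrite rsum_ev.
Qed.

Lemma vscale0 (v : vec n) : vscale 0 v = vzero n.
Proof. apply: functional_extensionality => i; rewrite /vscale /vzero; ring. Qed.

Lemma lin_zero (f : vec n -> vec n) : lin f -> f (vzero n) = vzero n.
Proof. move=> [_ Hs]; have := Hs 0 (vzero n); rewrite vscale0 => ->; exact: vscale0. Qed.

Lemma lin_vsum m (f : vec n -> vec n) (F : 'I_m -> vec n) :
  lin f -> f (vsum F) = vsum (fun i => f (F i)).
Proof.
move=> Hf; rewrite /vsum (big_morph f (id1 := vzero n) (op1 := @vadd n)) //.
- by move=> x y; rewrite (proj1 Hf).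
- exact: lin_zero.
Qed.

Lemma linR_vsum m (f : vec n -> R) (F : 'I_m -> vec n) :
  (forall x y, f (vadd x y) = f x + f y) -> (forall c x, f (vscale c x) = c * f x) ->
  f (vsum F) = rsum (fun i => f (F i)).
Proof.
move=> Ha Hs; rewrite /vsum /rsum (big_morph f (id1 := R0) (op1 := Rplus)) //.
by rewrite -(vscale0 (vzero n)) Hs; ring.
Qed.

Lemma vsub_eq (u v : vec n) : vsub u v = vzero n -> u = v.
Proof.
move=> H; apply: functional_extensionality => i.
have := f_equal (fun w => w i) H; rewrite /vsub /vzero /=; lra.
Qed.

Lemma vsub_alt (u v : vec n) : vsub u v = vadd u (vscale (-1) v).
Proof. apply: functional_extensionality => i; rewrite /vsub /vadd /vscale; ring. Qed.
End S.

Section C.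
Variable n : nat.

Lemma rsum_nonneg (f : 'I_n -> R) : (forall i, 0 <= f i) -> 0 <= rsum f.
Proof. move=> H; rewrite /rsum; apply: (big_ind (fun x => 0 <= x)) => //; [lra|move=> x y; lra]. Qed.

Lemma coord_le (v : vec n) j : Rabs (v j) <= vnorm v.
Proof.
rewrite /vnorm -sqrt_Rsqr_abs; apply: sqrt_le_1_alt; rewrite /Rsqr /rsum (bigD1 j) //=.
rewrite -{1}(Rplus_0_r (v j * v j)); apply: Rplus_le_compat_l.
apply: (big_ind (fun x => 0 <= x)) => //; [lra|move=> x y; lra|move=> i _; nra].
Qed.

Lemma vnorm_nonneg (v : vec n) : 0 <= vnorm v.
Proof. exact: sqrt_pos. Qed.

Lemma vnorm_sev t (j : 'I_n) : 0 <= t -> vnorm (vscale t (ev j)) = t.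
Proof.
move=> Ht; rewrite /vnorm.
have -> : (fun i => vscale t (ev j) i * vscale t (ev j) i) = (fun i => (t * t) * ev j i).
  apply: functional_extensionality => i; rewrite /vscale /ev; case: (i == j); ring.
by rewrite (@rsum_ev n (fun _ => t * t)) sqrt_square.
Qed.

Lemma Ck_ext k (f g : vec n -> R) : (forall a, f a = g a) -> Ck k f -> Ck k g.
Proof. by move=> H; rewrite (functional_extensionality f g H). Qed.

Lemma Ck_const k c : Ck k (fun _ : vec n => c).
Proof.
elim: k c => [|k IH] c /=.
- move=> a eps He; exists 1; split; first lra.
  move=> b _; rewrite Rminus_diag Rabs_R0; lra.
- exists (fun _ => vzero n); split; last by move=> j; exact: IH.
  move=> a eps He; exists 1; split; first lra.
  move=> h _; rewrite pair_zeror Rminus_diag Rminus_0_r Rabs_R0.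
  have := vnorm_nonneg h; nra.
Qed.

Lemma Ck_add k (f g : vec n -> R) : Ck k f -> Ck k g -> Ck k (fun a => f a + g a).
Proof.
elim: k f g => [|k IH] f g /=.
- move=> Hf Hg a eps He.
  have He2 : 0 < eps / 2 by lra.
  case: (Hf a _ He2) => d1 [Hd1 H1]; case: (Hg a _ He2) => d2 [Hd2 H2].
  exists (Rmin d1 d2); split; first exact: Rmin_pos.
  move=> b Hb.
  have := H1 b (Rlt_le_trans _ _ _ Hb (Rmin_l _ _)).
  have := H2 b (Rlt_le_trans _ _ _ Hb (Rmin_r _ _)).
  have := Rabs_triang (f b - f a) (g b - g a).
  have -> : f b - f a + (g b - g a) = f b + g b - (f a + g a) by ring.
  lra.
- move=> [df [Hdf Cf]] [dg [Hdg Cg]].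
  exists (fun a => vadd (df a) (dg a)); split; last first.
    by move=> j; apply: IH.
  move=> a eps He.
  have He2 : 0 < eps / 2 by lra.
  case: (Hdf a _ He2) => d1 [Hd1 H1]; case: (Hdg a _ He2) => d2 [Hd2 H2].
  exists (Rmin d1 d2); split; first exact: Rmin_pos.
  move=> h Hh.
  have := H1 h (Rlt_le_trans _ _ _ Hh (Rmin_l _ _)).
  have := H2 h (Rlt_le_trans _ _ _ Hh (Rmin_r _ _)).
  set A := f _ - _ - _; set B := g _ - _ - _.
  have := Rabs_triang A B.
  have -> : A + B = f (vadd a h) + g (vadd a h) - (f a + g a) - pair h (vadd (df a) (dg a)).
    by rewrite pair_addr /A /B; ring.
  lra.
Qed.

Lemma Ck_scal k c (f : vec n -> R) : Ck k f -> Ck k (fun a => c * f a).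
Proof.
have Hc : 0 < Rabs c + 1 by have := Rabs_pos c; lra.
elim: k f => [|k IH] f /=.
- move=> Hf a eps He.
  have He2 : 0 < eps / (Rabs c + 1) by apply: Rdiv_lt_0_compat.
  case: (Hf a _ He2) => d1 [Hd1 H1]; exists d1; split => // b Hb.
  have := H1 b Hb.
  have -> : c * f b - c * f a = c * (f b - f a) by ring.
  rewrite Rabs_mult => H.
  have Heq : eps = (Rabs c + 1) * (eps / (Rabs c + 1)) by field; lra.
  have := Rabs_pos c; have := Rabs_pos (f b - f a). nra.
- move=> [df [Hdf Cf]].
  exists (fun a => vscale c (df a)); split; last first.
    by move=> j; apply: IH.
  move=> a eps He.
  have He2 : 0 < eps / (Rabs c + 1) by apply: Rdiv_lt_0_compat.
  case: (Hdf a _ He2) => d1 [Hd1 H1]; exists d1; split => // h Hh.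
  have := H1 h Hh.
  have -> : c * f (vadd a h) - c * f a - pair h (vscale c (df a)) =
            c * (f (vadd a h) - f a - pair h (df a)) by rewrite pair_scalr; ring.
  rewrite Rabs_mult => H.
  have Heq : eps = (Rabs c + 1) * (eps / (Rabs c + 1)) by field; lra.
  have := Rabs_pos c; have := Rabs_pos (f (vadd a h) - f a - pair h (df a)).
  have := vnorm_nonneg h. nra.
Qed.

Lemma Ck_rsum k m (G : 'I_m -> vec n -> R) :
  (forall i, Ck k (G i)) -> Ck k (fun a => rsum (fun i => G i a)).
Proof.
move=> H.
have -> : (fun a => rsum (fun i => G i a)) =
          \big[(fun f g => fun a => f a + g a)/(fun _ => R0)]_(i < m) G i.
  apply: functional_extensionality => a; rewrite /rsum.
  by rewrite (big_morph (fun F : vec n -> R => F a) (id1 := R0) (op1 := Rplus)).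
apply: (big_ind (Ck k)) => //; [exact: Ck_const| move=> x y; exact: Ck_add].
Qed.

Lemma Ck_coord k j : Ck k (fun a : vec n => a j).
Proof.
case: k => [|k] /=.
- move=> a eps He; exists eps; split => // b Hb.
  have := coord_le (vsub b a) j; change (vsub b a j) with (b j - a j); lra.
- exists (fun _ => ev j); split; last by move=> i; exact: Ck_const.
  move=> a eps He; exists 1; split; first lra.
  move=> h _; rewrite pair_ev /vadd.
  have -> : a j + h j - a j - h j = 0 by ring.
  rewrite Rabs_R0; have := vnorm_nonneg h; nra.
Qed.

Lemma Ck_pair k w : Ck k (fun a : vec n => pair a w).
Proof.
rewrite /pair; apply: (@Ck_rsum k n (fun i a => a i * w i)) => i.
apply: (@Ck_ext k (fun a => w i * a i)); first by move=> a; ring.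
apply: Ck_scal; exact: Ck_coord.
Qed.

Lemma smooth_pair w : smooth (fun a : vec n => pair a w).
Proof. move=> k; exact: Ck_pair. Qed.

Lemma diff_pair w a : has_differential (fun b : vec n => pair b w) a w.
Proof.
move=> eps He; exists 1; split; first lra.
move=> h _; rewrite pair_addl.
have -> : pair a w + pair h w - pair a w - pair h w = 0 by ring.
rewrite Rabs_R0; have := vnorm_nonneg h; nra.
Qed.

Lemma small_zero x : (forall eps, 0 < eps -> Rabs x <= 2 * eps) -> x = 0.
Proof.
move=> H; case: (Req_dec x 0) => // Hx.
have Hp : 0 < Rabs x by apply: Rabs_pos_lt.
have := H (Rabs x / 4) ltac:(lra); lra.
Qed.

Lemma diff_unique f a (d d' : vec n) :
  has_differential f a d -> has_differential f a d' -> d = d'.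
Proof.
move=> H1 H2; apply: functional_extensionality => j.
apply: Rminus_diag_uniq; apply: small_zero => eps He.
case: (H1 _ He) => d1 [Hd1 K1]; case: (H2 _ He) => d2 [Hd2 K2].
set t := Rmin d1 d2 / 2.
have Ht : 0 < t by rewrite /t; have := Rmin_pos _ _ Hd1 Hd2; lra.
have Htm : t < Rmin d1 d2 by rewrite /t; have := Rmin_pos _ _ Hd1 Hd2; lra.
have Hn := vnorm_sev j (Rlt_le _ _ Ht).
have := K1 (vscale t (ev j)) ltac:(rewrite Hn; have := Rmin_l d1 d2; lra).
have := K2 (vscale t (ev j)) ltac:(rewrite Hn; have := Rmin_r d1 d2; lra).
rewrite Hn !pair_scall [pair (ev j) d]pair_comm [pair (ev j) d']pair_comm !pair_ev.
set A := f _ - f a.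
move=> Q2 Q1.
have := Rabs_triang (A - t * d j) (- (A - t * d' j)).
rewrite Rabs_Ropp.
have -> : A - t * d j + - (A - t * d' j) = t * (d' j - d j) by ring.
rewrite Rabs_mult (Rabs_pos_eq t (Rlt_le _ _ Ht)) => Q.
rewrite Rabs_minus_sym.
have : t * Rabs (d' j - d j) <= t * (2 * eps) by lra.
move=> Q3; apply: (Rmult_le_reg_l t) => //.
Qed.
End C.

Section V.
Variable n : nat.

Lemma vdiff_unique (F : vec n -> vec n) a D D' :
  has_vdifferential F a D -> has_vdifferential F a D' -> forall h, D h = D' h.
Proof.
move=> [LD H1] [LD' H2].
have Hev : forall k, D (ev k) = D' (ev k).
  move=> k; apply: functional_extensionality => j.
  apply: Rminus_diag_uniq; apply: small_zero => eps He.
  case: (H1 _ He) => d1 [Hd1 K1]; case: (H2 _ He) => d2 [Hd2 K2].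
  set t := Rmin d1 d2 / 2.
  have Ht : 0 < t by rewrite /t; have := Rmin_pos _ _ Hd1 Hd2; lra.
  have Hn := vnorm_sev k (Rlt_le _ _ Ht).
  have Q1 := K1 (vscale t (ev k)) ltac:(rewrite Hn /t; have := Rmin_l d1 d2; lra).
  have Q2 := K2 (vscale t (ev k)) ltac:(rewrite Hn /t; have := Rmin_r d1 d2; lra).
  have C1 := Rle_trans _ _ _ (coord_le _ j) Q1.
  have C2 := Rle_trans _ _ _ (coord_le _ j) Q2.
  rewrite Hn (proj2 LD) in C1; rewrite Hn (proj2 LD') in C2.
  move: C1 C2; rewrite /vsub /vscale.
  set A := F _ j - F a j => C1 C2.
  have := Rabs_triang (A - t * D (ev k) j) (- (A - t * D' (ev k) j)).
  rewrite Rabs_Ropp.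
  have -> : A - t * D (ev k) j + - (A - t * D' (ev k) j) = t * (D' (ev k) j - D (ev k) j) by ring.
  rewrite Rabs_mult (Rabs_pos_eq t (Rlt_le _ _ Ht)) => Q.
  rewrite Rabs_minus_sym.
  have : t * Rabs (D' (ev k) j - D (ev k) j) <= t * (2 * eps) by lra.
  move=> Q3; apply: (Rmult_le_reg_l t) => //.
move=> h; rewrite (vdecomp h) (lin_vsum _ LD) (lin_vsum _ LD').
congr vsum; apply: functional_extensionality => k.
by rewrite (proj2 LD) (proj2 LD') Hev.
Qed.
End V.

Lemma pair_subr n (a u v : vec n) : pair a (vsub u v) = pair a u - pair a v.
Proof. rewrite vsub_alt pair_addr pair_scalr; ring. Qed.

Lemma pair_lin_star n (f : vec n -> vec n) (a x : vec n) :
  lin f -> pair (fun j => - pair a (f (ev j))) x = - pair a (f x).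
Proof.
move=> Lf; rewrite {2}(vdecomp x) (lin_vsum _ Lf).
rewrite (@linR_vsum n n (fun y => pair a y)); last first.
  by move=> c y; rewrite pair_scalr. by move=> y z; rewrite pair_addr.
have Hn : forall g : 'I_n -> R, - rsum g = rsum (fun i => -1 * g i) by move=> g; rewrite rsum_scal; ring.
rewrite Hn {1}/pair; congr rsum; apply: functional_extensionality => j.
rewrite (proj2 Lf) pair_scalr; ring.
Qed.

Lemma lie_anti n (b : vec n -> vec n -> vec n) : is_lie b ->
  forall x y a, pair a (b x y) = - pair a (b y x).
Proof.
move=> [[Hl Hr] [H0 _]] x y a.
have E := H0 (vadd x y).
rewrite (proj1 (Hr (vadd x y))) (proj1 (Hl x)) (proj1 (Hl y)) H0 H0 in E.
have := f_equal (pair a) E; rewrite !pair_addr pair_zeror; lra.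
Qed.

Theorem theorem6p5 (n : nat)
  (br0 rho br : vec n -> vec n -> vec n) (B : vec n -> vec n -> R)
  (rr : 'I_n -> 'I_n -> R) (lam : R)
  (Htriple : triple_lie_algebra br0 rho br B rr lam)
  (H : vec n -> R) (dH : vec n -> vec n)
  (Hsmooth : smooth H)
  (HdH : forall a, has_differential H a (dH a))
  (Hcas : forall (a x : vec n),
      pair (rho_star rho x a) (dH a) = 0 /\ pair (ad_star br x a) (dH a) = 0)
  (e ed : 'I_n -> vec n) (Hbasis : is_basis e)
  (Hdual : forall i j, B (e i) (ed j) = if i == j then 1 else 0)
  (XH : vec n -> vec n)
  (HXH : hamiltonian_vf (bracket_r rho br rr B lam) dH XH) :
  let L := fun a : vec n => vsum (fun i => vscale (pair a (e i)) (ed i)) in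
  let M := fun a : vec n => rtilde rr B (dH a) in
  (forall a, (exists D, has_vdifferential L a D) /\
     forall D, has_vdifferential L a D -> D (XH a) = vopp (rho (M a) (L a))) /\
  self_dual_lax_pair br0 rho br B L M XH.
Proof.
move=> L M.
move: (Htriple) => [Hl0 [Hl [[Hrho [Hrep1 Hrep2]] [Hinv Hlr]]]].
move: (Hinv) => [[HBa1 [HBs1 [HBa2 HBs2]]] [HBs [HBnd [HBinv HBrho]]]].
have Lrho : forall m, lin (rho m) := proj1 Hrho.
have HLc : forall a, L a = fun j => rsum (fun i => pair a (e i) * ed i j).
  move=> a; apply: functional_extensionality => j; by rewrite /L vsum_app.
have linL : lin L.
  split.
  - move=> x y; rewrite !HLc; apply: functional_extensionality => j.
    rewrite /vadd -rsum_add; congr rsum; apply: functional_extensionality => i.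
    rewrite pair_addl; ring.
  - move=> c x; rewrite !HLc; apply: functional_extensionality => j.
    rewrite /vscale -rsum_scal; congr rsum; apply: functional_extensionality => i.
    rewrite pair_scall; ring.
have dL : forall a, has_vdifferential L a L.
  move=> a; split => // eps He; exists 1; split; first lra.
  move=> h _.
  have -> : vsub (vsub (L (vadd a h)) (L a)) (L h) = vzero n.
    rewrite (proj1 linL); apply: functional_extensionality => j.
    rewrite /vsub /vadd /vzero; ring.
  have -> : vnorm (vzero n) = 0.
    rewrite /vnorm /vzero.
    have -> : (fun i : 'I_n => R0 * R0) = (fun _ => 0) by apply: functional_extensionality => i; ring.
    by rewrite rsum0 sqrt_0.
  have := vnorm_nonneg h; nra.
have Hexp : forall (f g : vec n -> R),
    (forall x y, f (vadd x y) = f x + f y) -> (forall c x, f (vscale c x) = c * f x) ->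
    (forall x y, g (vadd x y) = g x + g y) -> (forall c x, g (vscale c x) = c * g x) ->
    (forall k, f (e k) = g (e k)) -> forall y, f y = g y.
  move=> f g fa fs ga gs Hk y.
  case: (proj2 Hbasis y) => c ->.
  rewrite (linR_vsum _ fa fs) (linR_vsum _ ga gs); congr rsum.
  apply: functional_extensionality => k; by rewrite fs gs Hk.
have HLB : forall b y, B (L b) y = pair b y.
  move=> b; apply: Hexp.
  - by move=> x y; rewrite HBa2.
  - by move=> c x; rewrite HBs2.
  - by move=> x y; rewrite pair_addr.
  - by move=> c x; rewrite pair_scalr.
  move=> k; rewrite /L (@linR_vsum n n (fun x => B x (e k))); last first.
    by move=> c x; rewrite HBs1. by move=> x y; rewrite HBa1.
  have -> : (fun i => B (vscale (pair b (e i)) (ed i)) (e k)) = (fun i => pair b (e i) * ev k i).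
    apply: functional_extensionality => i; rewrite HBs1 HBs Hdual /ev eq_sym //.
  by rewrite rsum_ev.
have HXe : forall a i, pair (XH a) (e i) = pair a (rho (M a) (e i)).
  move=> a i.
  have := HXH (fun b => pair b (e i)) (fun _ => e i) (smooth_pair (e i))
            (fun b => diff_pair (e i) b) a.
  rewrite /poisson /bracket_r pair_addr pair_subr pair_scalr => ->.
  have C1 : pair a (rho (rtilde rr B (e i)) (dH a)) = 0.
    have := proj1 (Hcas a (rtilde rr B (e i))).
    by rewrite /rho_star (pair_lin_star _ _ (Lrho _)) => /Ropp_eq_0_compat; rewrite Ropp_involutive.
  have C2 : pair a (br (dH a) (e i)) = 0.
    have := proj2 (Hcas a (e i)).
    rewrite /ad_star (pair_lin_star _ _ (proj1 (proj1 Hl) (e i))) (lie_anti Hl) => H0.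
    lra.
  rewrite C1 C2 /M; ring.
have Hmain : forall a, L (XH a) = vopp (rho (M a) (L a)).
  move=> a; apply: vsub_eq; apply: HBnd => y.
  rewrite vsub_alt HBa1 HBs1 HLB.
  have -> : vopp (rho (M a) (L a)) = vscale (-1) (rho (M a) (L a)).
    apply: functional_extensionality => i; rewrite /vopp /vscale; ring.
  rewrite HBs1.
  have -> : B (rho (M a) (L a)) y = - pair a (rho (M a) y).
    have := HBrho (M a) (L a) y; rewrite HLB; lra.
  suff -> : pair (XH a) y = pair a (rho (M a) y) by ring.
  move: y; apply: Hexp.
  - by move=> x y; rewrite pair_addr.
  - by move=> c x; rewrite pair_scalr.
  - by move=> x y; rewrite (proj1 (Lrho _)) pair_addr.
  - by move=> c x; rewrite (proj2 (Lrho _)) pair_scalr.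
  exact: HXe.
have Hpart : forall a, (exists D, has_vdifferential L a D) /\
     forall D, has_vdifferential L a D -> D (XH a) = vopp (rho (M a) (L a)).
  move=> a; split; first by exists L.
  move=> D HD; rewrite -(vdiff_unique (dL a) HD); exact: Hmain.
have sL : smooth_v L.
  move=> j k.
  apply: (@Ck_ext n k (fun a => rsum (fun i => ed i j * pair a (e i)))).
    move=> a; rewrite HLc; congr rsum; apply: functional_extensionality => i; ring.
  apply: (@Ck_rsum n k n (fun i a => ed i j * pair a (e i))) => i.
  apply: Ck_scal; exact: Ck_pair.
have sdH : forall k j, Ck k (fun a => dH a j).
  move=> k j; case: (Hsmooth k.+1) => df [Hdf Cdf].
  apply: (@Ck_ext n k (fun a => df a j)) => [a|]; last exact: Cdf.
  by rewrite (diff_unique (Hdf a) (HdH a)).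
have sM : smooth_v M.
  move=> j k.
  apply: (@Ck_ext n k (fun a => rsum (fun i => rr i j * rsum (fun l => B (ev l) (ev i) * dH a l)))).
    move=> a; rewrite /M /rtilde /r_map /phiB; congr rsum; apply: functional_extensionality => i.
    rewrite {2}(vdecomp (dH a)) (@linR_vsum n n (fun x => B x (ev i))); last first.
      by move=> c x; rewrite HBs1. by move=> x y; rewrite HBa1.
    rewrite Rmult_comm; congr (_ * _); congr rsum; apply: functional_extensionality => l.
    by rewrite HBs1 Rmult_comm.
  apply: (@Ck_rsum n k n (fun i a => rr i j * rsum (fun l => B (ev l) (ev i) * dH a l))) => i.
  apply: Ck_scal.
  apply: (@Ck_rsum n k n (fun l a => B (ev l) (ev i) * dH a l)) => l.
  apply: Ck_scal; exact: sdH.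
split; first exact: Hpart.
by rewrite /self_dual_lax_pair; repeat split => //.
Qed.
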